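(* Let $X,Y$ be Banach spaces and $N$ an absolute normalized norm on $\mathbb R^2$. (1) If $x\in S_X$ and $y\in S_Y$ are super $\Delta$-points, then $(ax,by)$ is a super $\Delta$-point of $X\oplus_NY$ for every $(a,b)\in\mathbb R^2$ with $N(a,b)=1$. (2) If $x\in S_X$ is a super $\Delta$-point then $(x,0)$ is a super $\Delta$-point of $X\oplus_NY$; if $y\in S_Y$ is a super $\Delta$-point then $(0,y)$ is a super $\Delta$-point of $X\oplus_NY$.
   Context: A norm $N$ on $\mathbb R^2$ is absolute if $N(a,b)=N(|a|,|b|)$ and normalized if $N(1,0)=N(0,1)=1$. $X\oplus_NY$ is $X\times Y$ with norm $\|(x,y)\|=N(\|x\|,\|y\|)$. An element $x\in S_X$ is a super $\Delta$-point if $\sup_{z\in V}\|x-z\|=2$ for every relatively weakly open subset $V$ of $B_X$ containing $x$. *)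

(* Defs.v *)
From HB Require Import structures.
From mathcomp Require Import all_boot all_order all_algebra.
From mathcomp Require Import all_classical all_reals all_analysis.
Set Implicit Arguments. Unset Strict Implicit. Unset Printing Implicit Defensive.
Import Order.TTheory GRing.Theory Num.Theory.
Import numFieldNormedType.Exports.
Local Open Scope classical_set_scope.
Local Open Scope ring_scope.

Section Defs.
Context {R : realType}.

Definition abs_norm_R2 (N : R -> R -> R) : Prop :=
  [/\ (forall a b, N a b = 0 -> a = 0 /\ b = 0),
      (forall l a b, N (l * a) (l * b) = `|l| * N a b),
      (forall a b c d, N (a + c) (b + d) <= N a b + N c d),
      (forall a b, N a b = N `|a| `|b|) &
      (N 1 0 = 1 /\ N 0 1 = 1)].

Context {V : lmodType R} (nrm : V -> R).

Definition dual_functional (f : V -> R) : Prop :=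
  (forall (l : R) (u v : V), f (l *: u + v) = l * f u + f v) /\
  (forall v (e : R), 0 < e -> exists2 d : R, 0 < d &
      forall w, nrm (w - v) < d -> `|f w - f v| < e).

Definition weakly_open (U : set V) : Prop :=
  forall z, U z -> exists (n : nat) (fs : 'I_n -> V -> R) (e : R),
    [/\ 0 < e, (forall i, dual_functional (fs i)) &
        forall w, (forall i, `|fs i w - fs i z| < e) -> U w].

Definition unit_ball : set V := [set v | nrm v <= 1].
Definition unit_sphere : set V := [set v | nrm v = 1].

Definition rel_weakly_open_ball (W : set V) : Prop :=
  exists2 U, weakly_open U & W = unit_ball `&` U.

Definition super_delta_point (x : V) : Prop :=
  unit_sphere x /\
  forall W, rel_weakly_open_ball W -> W x ->
    sup [set nrm (x - z) | z in W] = 2.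

End Defs.

Definition sumN {R : realType} {X Y : normedModType R} (N : R -> R -> R)
  (p : (X * Y)%type) : R := N `|p.1| `|p.2|.

(* Main.v *)
Require Import Defs.
From HB Require Import structures.
From mathcomp Require Import all_boot all_order all_algebra.
From mathcomp Require Import all_classical all_reals all_analysis.
From mathcomp Require Import ring lra.
Import Order.TTheory GRing.Theory Num.Theory.
Import numFieldNormedType.Exports.
Set Implicit Arguments.
Local Open Scope classical_set_scope.
Local Open Scope ring_scope.

Section Aux.
Context {R : realType}.

Lemma sup_eq2 (S : set R) : S !=set0 -> (forall s, S s -> s <= 2) ->
  (forall d, 0 < d -> d < 1 -> exists s, S s /\ 2 - d <= s) -> sup S = 2.
Proof.
move=> S0 ub hd.
have hs : has_sup S by split=> //; exists 2.
apply/eqP; rewrite eq_le; apply/andP; split; first exact: ge_sup.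
case: (leP 2 (sup S)) => // hlt.
pose d := Num.min ((2 - sup S) / 2) (1 / 2).
have d0 : 0 < d by rewrite /d lt_min; apply/andP; split; apply: divr_gt0 => //; lra.
have d1 : d < 1 by rewrite /d gt_min; apply/orP; right; lra.
have [s [Ss hs2]] := hd d d0 d1.
have := ub_le_sup (proj2 hs) Ss.
have : d <= (2 - sup S) / 2 by rewrite /d ge_min lexx.
move=> h1 h2.
have : sup S < 2 - d by lra.
lra.
Qed.

Context {V : lmodType R} (nrm : V -> R).

Lemma df_lin (f : V -> R) : dual_functional nrm f ->
  [/\ f 0 = 0, (forall l u, f (l *: u) = l * f u) & (forall u v, f (u + v) = f u + f v)].
Proof.
move=> [hl _].
have f0 : f 0 = 0.
  have := hl 1 0 0; rewrite scale1r addr0 mul1r => h.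
  lra.
split=> //.
  by move=> l u; have := hl l u 0; rewrite addr0 f0 addr0.
by move=> u v; have := hl 1 u v; rewrite scale1r mul1r.
Qed.

Definition mkU (n : nat) (fs : 'I_n -> V -> R) (x0 : V) (e : R) : set V :=
  [set u | exists2 d : R, 0 < d & forall w, (forall i, `|fs i w - fs i u| < d) ->
     forall i, `|fs i w - fs i x0| < e].

Lemma mkU_open n fs x0 e : (forall i, dual_functional nrm (fs i)) ->
  weakly_open nrm (@mkU n fs x0 e).
Proof.
move=> hf z [d d0 hz]; exists n, fs, (d / 2); split => //.
  by rewrite divr_gt0.
move=> w hw; exists (d / 2); first by rewrite divr_gt0.
move=> w' hw'; apply: hz => i.
have := ler_distD (fs i w) (fs i w') (fs i z).
have := hw i; have := hw' i; lra.
Qed.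

Lemma mkU_center n fs x0 e : 0 < e -> @mkU n fs x0 e x0.
Proof. by move=> e0; exists e => // w hw i; exact: hw. Qed.

Lemma mkU_in n fs x0 e u : @mkU n fs x0 e u -> forall i, `|fs i u - fs i x0| < e.
Proof. by move=> [d d0 h]; apply: h => i; rewrite subrr normr0. Qed.

End Aux.

Section NormN.
Context {R : realType} (N : R -> R -> R) (HN : abs_norm_R2 N).

Lemma N_hom l a b : N (l * a) (l * b) = `|l| * N a b.
Proof. by case: HN. Qed.
Lemma N_tri a b c d : N (a + c) (b + d) <= N a b + N c d.
Proof. by case: HN. Qed.
Lemma N_abs a b : N a b = N `|a| `|b|.
Proof. by case: HN. Qed.
Lemma N10 : N 1 0 = 1. Proof. by case: HN => _ _ _ _ []. Qed.
Lemma N01 : N 0 1 = 1. Proof. by case: HN => _ _ _ _ []. Qed.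

Lemma N_ge0 a b : 0 <= N a b.
Proof.
have h0 : N 0 0 = 0 by have := N_hom 0 0 0; rewrite !mul0r normr0 mul0r.
have hn : N (- a) (- b) = N a b.
  by have := N_hom (-1) a b; rewrite !mulN1r normrN normr1 mul1r.
have := N_tri a b (- a) (- b); rewrite !subrr h0 hn; lra.
Qed.

Lemma N_mono_l a a' b : 0 <= a -> a <= a' -> N a b <= N a' b.
Proof.
move=> a0 aa.
have [e0|a'0] := eqVneq a' 0.
  have -> : a = 0 by rewrite e0 in aa; apply/eqP; rewrite eq_le aa a0.
  by rewrite e0.
have a'p : 0 < a' by rewrite lt_def a'0 (le_trans a0 aa).
pose t := (a' + a) / (2 * a').
have t0 : 0 <= t by apply: divr_ge0; lra.
have t1 : t <= 1 by rewrite /t ler_pdivrMr ?mul1r; lra.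
have -> : N a b = N (t * a' + (1 - t) * (- a')) (t * b + (1 - t) * b).
  congr N; rewrite /t; field; lra.
apply: le_trans (N_tri _ _ _ _) _.
rewrite !N_hom (N_abs (- a')) normrN -N_abs (ger0_norm t0) ger0_norm; lra.
Qed.

Lemma N_mono_r a b b' : 0 <= b -> b <= b' -> N a b <= N a b'.
Proof.
move=> b0 bb.
have [e0|b'0] := eqVneq b' 0.
  have -> : b = 0 by rewrite e0 in bb; apply/eqP; rewrite eq_le bb b0.
  by rewrite e0.
have b'p : 0 < b' by rewrite lt_def b'0 (le_trans b0 bb).
pose t := (b' + b) / (2 * b').
have t0 : 0 <= t by apply: divr_ge0; lra.
have t1 : t <= 1 by rewrite /t ler_pdivrMr ?mul1r; lra.
have -> : N a b = N (t * a + (1 - t) * a) (t * b' + (1 - t) * (- b')).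
  congr N; rewrite /t; field; lra.
apply: le_trans (N_tri _ _ _ _) _.
rewrite !N_hom (N_abs _ (- b')) normrN -N_abs (ger0_norm t0) ger0_norm; lra.
Qed.

Lemma N_mono a a' b b' : `|a| <= `|a'| -> `|b| <= `|b'| -> N a b <= N a' b'.
Proof.
move=> ha hb; rewrite (N_abs a) (N_abs a').
apply: (le_trans (N_mono_l _ _ _ (normr_ge0 a) ha)).
exact: N_mono_r (normr_ge0 _) hb.
Qed.

End NormN.

Section Prod.
Context {R : realType} {X Y : normedModType R} (N : R -> R -> R) (HN : abs_norm_R2 N).

Local Notation nrm := (sumN (X:=X) (Y:=Y) N).

Lemma sumN_tri (p q : X * Y) : nrm (p + q) <= nrm p + nrm q.
Proof.
rewrite /sumN; apply: le_trans _ (N_tri HN _ _ _ _).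
apply: N_mono => //; rewrite normr_id ger0_norm ?addr_ge0 //; exact: ler_normD.
Qed.

Lemma sumN_opp (p : X * Y) : nrm (- p) = nrm p.
Proof. by rewrite /sumN /= !normrN. Qed.

Lemma sumN_ge0 (p : X * Y) : 0 <= nrm p.
Proof. exact: N_ge0. Qed.

Lemma pairZ (a b : R) (u : X) (v : Y) : (a *: u, b *: v) = a *: (u, 0) + b *: (0, v).
Proof. by apply/eqP; rewrite xpair_eqE /= !scaler0 addr0 add0r !eqxx. Qed.

Lemma nrm_x0 (u : X) : nrm (u, 0) = `|u|.
Proof.
rewrite /sumN /= normr0.
by have := N_hom HN `|u| 1 0; rewrite mulr1 mulr0 normr_id N10 // mulr1.
Qed.

Lemma nrm_0y (v : Y) : nrm (0, v) = `|v|.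
Proof.
rewrite /sumN /= normr0.
by have := N_hom HN `|v| 0 1; rewrite mulr1 mulr0 normr_id N01 // mulr1.
Qed.

Lemma df_X (f : X * Y -> R) : dual_functional nrm f ->
  dual_functional (fun v : X => `|v|) (fun u => f (u, 0)).
Proof.
move=> hf; have [f0 fZ fD] := df_lin hf; split.
  move=> l u v; have -> : (l *: u + v, 0) = l *: ((u, 0) : X * Y) + (v, 0).
    by apply/eqP; rewrite xpair_eqE /= scaler0 addr0 !eqxx.
  by rewrite fD fZ.
move=> v e e0; have [d d0 hd] := (proj2 hf) (v, 0) e e0.
exists d => // w hw; apply: hd.
have -> : ((w, 0) - (v, 0) : X * Y) = (w - v, 0).
  by apply/eqP; rewrite xpair_eqE /= subrr !eqxx.
by rewrite nrm_x0.
Qed.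

Lemma df_Y (f : X * Y -> R) : dual_functional nrm f ->
  dual_functional (fun v : Y => `|v|) (fun u => f (0, u)).
Proof.
move=> hf; have [f0 fZ fD] := df_lin hf; split.
  move=> l u v; have -> : (0, l *: u + v) = l *: ((0, u) : X * Y) + (0, v).
    by apply/eqP; rewrite xpair_eqE /= scaler0 addr0 !eqxx.
  by rewrite fD fZ.
move=> v e e0; have [d d0 hd] := (proj2 hf) (0, v) e e0.
exists d => // w hw; apply: hd.
have -> : ((0, w) - (0, v) : X * Y) = (0, w - v).
  by apply/eqP; rewrite xpair_eqE /= subrr !eqxx.
by rewrite nrm_0y.
Qed.

End Prod.

Section Extract.
Context {R : realType} {V : lmodType R} (nrm : V -> R).

Lemma sdp_near (x : V) : super_delta_point nrm x ->
  (forall z, unit_ball nrm z -> nrm (x - z) <= 2) ->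
  forall W, rel_weakly_open_ball nrm W -> W x ->
  forall d, 0 < d -> exists u, W u /\ 2 - d < nrm (x - u).
Proof.
move=> [_ hs] hb W hW Wx d d0.
have := hs W hW Wx.
set S := [set nrm (x - z) | z in W] => hS.
have hsup : has_sup S.
  split; first by exists (nrm (x - x)); exists x.
  exists 2 => s [z Wz <-]; apply: hb.
  by case: hW => U _ hWe; move: Wz; rewrite hWe => -[].
have [s [z Wz <-] hlt] := sup_adherent d0 hsup.
by exists z; split => //; rewrite -hS.
Qed.

End Extract.

Lemma sdp_norm {R : realType} (X : normedModType R) (x : X) :
  super_delta_point (fun v : X => `|v|) x ->
  forall W, rel_weakly_open_ball (fun v : X => `|v|) W -> W x ->
  forall d, 0 < d -> exists u, W u /\ 2 - d < `|x - u|.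
Proof.
move=> hx; apply: (sdp_near hx) => z hz.
apply: le_trans (ler_normB _ _) _.
move: hz; rewrite /unit_ball /=; case: hx => hx _; move: hx; rewrite /unit_sphere /= => ->.
lra.
Qed.

Section Key.
Context {R : realType} {X Y : normedModType R} (N : R -> R -> R) (HN : abs_norm_R2 N).

Local Notation nrm := (sumN (X:=X) (Y:=Y) N).

Lemma key a b (x : X) (y : Y) : N a b = 1 ->
  `|a| * `|x| = `|a| -> `|b| * `|y| = `|b| -> `|x| <= 1 -> `|y| <= 1 ->
  (forall W, rel_weakly_open_ball (fun v : X => `|v|) W -> W x ->
     forall d, 0 < d -> exists u, W u /\ `|a| * (2 - d) <= `|a| * `|x - u|) ->
  (forall W, rel_weakly_open_ball (fun v : Y => `|v|) W -> W y ->
     forall d, 0 < d -> exists v, W v /\ `|b| * (2 - d) <= `|b| * `|y - v|) ->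
  super_delta_point nrm (a *: x, b *: y).
Proof.
move=> Nab hax hby x1 y1 PX PY.
have nrmZ : forall (u : X) (v : Y), nrm (a *: u, b *: v) = N (`|a| * `|u|) (`|b| * `|v|).
  by move=> u v; rewrite /sumN /= !normrZ.
have p1 : nrm (a *: x, b *: y) = 1 by rewrite nrmZ hax hby -N_abs.
split; first exact: p1.
move=> W [U hU ->] [_ Up].
apply: sup_eq2.
- exists (nrm ((a *: x, b *: y) - (a *: x, b *: y))); exists (a *: x, b *: y) => //.
  by split => //; rewrite /unit_ball /= p1.
- move=> s [z [zb _] <-]; apply: le_trans (sumN_tri HN _ _) _; rewrite sumN_opp p1.
  move: zb; rewrite /unit_ball /=; lra.
move=> d d0 d1.
have [n [fs [e [e0 hfs hcl]]]] := hU _ Up.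
pose e' := e / (`|a| + `|b| + 1).
have den0 : 0 < `|a| + `|b| + 1 by rewrite ltr_wpDl ?addr_ge0.
have e'0 : 0 < e' by rewrite divr_gt0.
pose gX i := fun u : X => fs i (u, 0).
pose gY i := fun v : Y => fs i (0, v).
have [u [[ub uU] hu]] := PX (unit_ball (fun v : X => `|v|) `&` mkU gX x e') 
   (ex_intro2 _ _ (mkU gX x e') (mkU_open (fun i => df_X HN (hfs i))) erefl)
   (conj x1 (@mkU_center _ _ _ gX x e' e'0)) d d0.
have [v [[vb vU] hv]] := PY (unit_ball (fun v : Y => `|v|) `&` mkU gY y e') 
   (ex_intro2 _ _ (mkU gY y e') (mkU_open (fun i => df_Y HN (hfs i))) erefl)
   (conj y1 (@mkU_center _ _ _ gY y e' e'0)) d d0.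
exists (nrm ((a *: x, b *: y) - (a *: u, b *: v))); split.
  exists (a *: u, b *: v) => //; split.
    rewrite /unit_ball /= nrmZ -Nab (N_abs HN a b).
    apply: N_mono => //; rewrite normr_id ger0_norm ?mulr_ge0 //; exact: ler_piMr.
  apply: hcl => i.
  have [f0 fZ fD] := df_lin (hfs i).
  rewrite (pairZ a b u v) (pairZ a b x y) !fD !fZ.
  have hu' := mkU_in uU i; have hv' := mkU_in vU i.
  rewrite /gX /gY in hu' hv'.
  set A := fs i (u, 0) in hu' *; set A' := fs i (x, 0) in hu' *.
  set B := fs i (0, v) in hv' *; set B' := fs i (0, y) in hv' *.
  have -> : a * A + b * B - (a * A' + b * B') = a * (A - A') + b * (B - B') by ring.
  apply: le_lt_trans (ler_normD _ _) _; rewrite !normrM.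
  have h1 : `|a| * `|A - A'| <= `|a| * e' by apply: ler_wpM2l => //; exact: ltW.
  have h2 : `|b| * `|B - B'| <= `|b| * e' by apply: ler_wpM2l => //; exact: ltW.
  have h3 : `|a| * e' + `|b| * e' + e' = e.
    rewrite /e'; field; rewrite gt_eqF //.
  lra.
rewrite /sumN /= -!scalerBr !normrZ.
have -> : 2 - d = N ((2 - d) * `|a|) ((2 - d) * `|b|).
  by rewrite N_hom // -N_abs // Nab ger0_norm ?mulr1 //; lra.
have d2 : 0 <= 2 - d by lra.
apply: (N_mono HN); rewrite !normrM !normr_id (ger0_norm d2) mulrC.
  exact: hu.
exact: hv.
Qed.

End Key.

Theorem mainTheorem6 (R : realType) (X Y : completeNormedModType R)
  (N : R -> R -> R) (HN : abs_norm_R2 N) :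
  (forall (x : X) (y : Y),
     super_delta_point (fun v : X => `|v|) x ->
     super_delta_point (fun v : Y => `|v|) y ->
     forall a b : R, N a b = 1 ->
       super_delta_point (sumN (X:=X) (Y:=Y) N) (a *: x, b *: y)) /\
  (forall x : X, super_delta_point (fun v : X => `|v|) x ->
       super_delta_point (sumN (X:=X) (Y:=Y) N) (x, 0)) /\
  (forall y : Y, super_delta_point (fun v : Y => `|v|) y ->
       super_delta_point (sumN (X:=X) (Y:=Y) N) (0, y)).
Proof.
have PZ : forall (Z : normedModType R) (z : Z) (c : R),
  super_delta_point (fun v : Z => `|v|) z ->
  forall W, rel_weakly_open_ball (fun v : Z => `|v|) W -> W z ->
     forall d, 0 < d -> exists u, W u /\ `|c| * (2 - d) <= `|c| * `|z - u|.
  move=> Z z c hz W hW Wz d d0; have [u [Wu hu]] := sdp_norm hz hW Wz d d0.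
  by exists u; split => //; apply: ler_wpM2l => //; exact: ltW.
have P0 : forall (Z : normedModType R) (c : R),
  forall W, rel_weakly_open_ball (fun v : Z => `|v|) W -> W 0 ->
     forall d, 0 < d -> exists u, W u /\ `|0 : R| * (2 - d) <= `|0 : R| * `|0 - u|.
  by move=> Z _ W _ W0 d _; exists 0; split => //; rewrite normr0 !mul0r.
split; [|split].
- move=> x y hx hy a b Nab.
  have hx1 : `|x| = 1 by case: hx.
  have hy1 : `|y| = 1 by case: hy.
  apply: key => //; rewrite ?hx1 ?hy1 ?mulr1 //; exact: PZ.
- move=> x hx.
  have hx1 : `|x| = 1 by case: hx.
  have -> : (x, 0) = (1 *: x, 0 *: (0 : Y)) by rewrite scale1r scale0r.
  apply: key => //; rewrite ?hx1 ?normr0 ?mulr1 ?mulr0 ?ler01 //.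
  + exact: N10.
  + exact: PZ.
  + by move=> W _ W0 d _; exists 0; split => //; rewrite ?normr0 !mul0r.
- move=> y hy.
  have hy1 : `|y| = 1 by case: hy.
  have -> : (0, y) = (0 *: (0 : X), 1 *: y) by rewrite scale1r scale0r.
  apply: key => //; rewrite ?hy1 ?normr0 ?mulr1 ?mulr0 ?ler01 //.
  + exact: N01.
  + by move=> W _ W0 d _; exists 0; split => //; rewrite ?normr0 !mul0r.
  + exact: PZ.
Qed.
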